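(* Let $\tilde M=G/K$ be an irreducible Riemannian symmetric space with Cartan decomposition $\mathfrak g=\mathfrak k\oplus\mathfrak p$, and let $\mathfrak a\subset\mathfrak p$ be a maximal abelian subspace with restricted root system $\Delta\subset\mathfrak a$. \begin{enumerate} \item[(a)] If $\beta,\gamma\in\Delta$ are neither proportional nor orthogonal, then $\tilde R(A,X_\beta)X_\gamma\neq0$ for all nonzero $X_\beta\in\mathfrak p_\beta$, $X_\gamma\in\mathfrak p_\gamma$ and all $A\in\mathfrak a$ with $\langle\beta,A\rangle\neq0$. \item[(b)] If $X,Y\in\mathfrak p$ satisfy $\tilde R(X,Z,W,Y)=0$ for all $Z,W\in\mathfrak p$, then $X=0$ or $Y=0$. \end{enumerate}
   Context: $\varepsilon=\pm1$ is the sign of the Einstein constant of $\tilde M$, $B$ is the Killing form of $\mathfrak g$, and $\mathfrak p\cong T_o\tilde M$ carries the inner product $\langle X,Y\rangle=-\varepsilon B(X,Y)$. The curvature is $\tilde R(X,Y)Z=-[[X,Y],Z]$ and $\tilde R(X,Y,Z,W)=\langle\tilde R(X,Y)Z,W\rangle$. For $\beta\in\mathfrak a$, $\mathfrak g_\beta=\{X\in\mathfrak g:[A,[A,X]]=-\varepsilon\langle\beta,A\rangle^2X\ \forall A\in\mathfrak a\}$; a restricted root is a nonzero $\beta\in\mathfrak a$ with $\mathfrak g_\beta\neq0$, and $\mathfrak p_\beta=\mathfrak g_\beta\cap\mathfrak p$ is its root space. *)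

(* Defs.v *)
(* A real Lie algebra g is modelled as R^n = 'rV[R]_n with a
   bracket br; the symmetric pair is given by an involutive automorphism theta. *)
From HB Require Import structures.
From mathcomp Require Import all_boot all_order all_algebra.
From mathcomp Require Import reals.
Set Implicit Arguments. Unset Strict Implicit. Unset Printing Implicit Defensive.
Import Order.TTheory GRing.Theory Num.Theory.
Local Open Scope ring_scope.

Section SymDefs.
Variables (R : realType) (n : nat).
Local Notation V := 'rV[R]_n.

Definition lie_bracket (br : V -> V -> V) : Prop :=
  [/\ forall (c : R) x y z, br (c *: x + y) z = c *: br x z + br y z,
      forall (c : R) x y z, br z (c *: x + y) = c *: br z x + br z y,
      forall x, br x x = 0
    & forall x y z, br x (br y z) + br y (br z x) + br z (br x y) = 0].

Definition ad (br : V -> V -> V) (X : V) : 'M[R]_n := lin1_mx (br X).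
Definition killing (br : V -> V -> V) (X Y : V) : R := \tr (ad br X *m ad br Y).

(* semisimple (Helgason's definition): nondegenerate Killing form *)
Definition semisimple (br : V -> V -> V) : Prop :=
  forall X, (forall Y, killing br X Y = 0) -> X = 0.

Definition involutive_aut (br : V -> V -> V) (theta : V -> V) : Prop :=
  [/\ forall (c : R) x y, theta (c *: x + y) = c *: theta x + theta y,
      forall x y, theta (br x y) = br (theta x) (theta y)
    & forall x, theta (theta x) = x].

Definition kpart (theta : V -> V) (X : V) : Prop := theta X = X.
Definition ppart (theta : V -> V) (X : V) : Prop := theta X = - X.

Definition inner (br : V -> V -> V) (eps : R) (X Y : V) : R := - eps * killing br X Y.

(* Irreducible Riemannian symmetric space G/K of compact (eps = 1) or
   noncompact (eps = -1) type, given by the orthogonal symmetric Lie algebra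
   (g, theta): g semisimple, k compactly embedded (B negative definite on k),
   <.,.> = -eps B positive definite on p, k contains no nonzero ideal of g,
   and ad(k) acts irreducibly on p. *)
Definition irreducible_symmetric (br : V -> V -> V) (theta : V -> V) (eps : R) : Prop :=
  [/\ lie_bracket br, semisimple br, involutive_aut br theta
    & eps = 1 \/ eps = -1] /\
  [/\ forall X, kpart theta X -> X != 0 -> killing br X X < 0,
      forall X, ppart theta X -> X != 0 -> 0 < inner br eps X X,
      forall I : {vspace V},
        (forall X, X \in I -> kpart theta X) ->
        (forall X Y, X \in I -> br Y X \in I) -> I = 0%VS
    & forall W : {vspace V},
        (forall X, X \in W -> ppart theta X) ->
        (forall K X, kpart theta K -> X \in W -> br K X \in W) ->
        W = 0%VS \/ (forall X, ppart theta X -> X \in W)].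

Definition abelian_sub (br : V -> V -> V) (theta : V -> V) (a : {vspace V}) : Prop :=
  (forall A, A \in a -> ppart theta A) /\
  (forall A B, A \in a -> B \in a -> br A B = 0).

Definition max_abelian (br : V -> V -> V) (theta : V -> V) (a : {vspace V}) : Prop :=
  abelian_sub br theta a /\
  (forall b : {vspace V}, abelian_sub br theta b -> (a <= b)%VS -> b = a).

Definition in_gbeta (br : V -> V -> V) (eps : R) (a : {vspace V}) (beta X : V) : Prop :=
  forall A, A \in a -> br A (br A X) = (- eps * (inner br eps beta A) ^+ 2) *: X.

Definition in_pbeta (br : V -> V -> V) (theta : V -> V) (eps : R) (a : {vspace V})
  (beta X : V) : Prop := ppart theta X /\ in_gbeta br eps a beta X.

Definition restricted_root (br : V -> V -> V) (eps : R) (a : {vspace V}) (beta : V) : Prop :=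
  [/\ beta \in a, beta != 0 & exists X, X != 0 /\ in_gbeta br eps a beta X].

Definition curv (br : V -> V -> V) (X Y Z : V) : V := - br (br X Y) Z.
Definition curv4 (br : V -> V -> V) (eps : R) (X Y Z W : V) : R :=
  inner br eps (curv br X Y Z) W.

Definition proportional (beta gamma : V) : Prop := exists c : R, beta = c *: gamma.

End SymDefs.

(* Main.v *)
Require Import Defs.
From HB Require Import structures.
From mathcomp Require Import all_boot all_order all_algebra.
From mathcomp Require Import reals.
Import Order.TTheory GRing.Theory Num.Theory.
Local Open Scope ring_scope.
Set Implicit Arguments. Unset Strict Implicit.

Section Basics.
Variables (R : realType) (n : nat) (br : 'rV[R]_n -> 'rV[R]_n -> 'rV[R]_n)
  (theta : 'rV[R]_n -> 'rV[R]_n) (eps : R).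
Local Notation V := 'rV[R]_n.
Hypothesis Hbr : lie_bracket br.
Hypothesis Hth : involutive_aut br theta.

Lemma brDl x y z : br (x + y) z = br x z + br y z.
Proof. by case: Hbr => h _ _ _; have := h 1 x y z; rewrite !scale1r. Qed.
Lemma brDr x y z : br z (x + y) = br z x + br z y.
Proof. by case: Hbr => _ h _ _; have := h 1 x y z; rewrite !scale1r. Qed.
Lemma br0l z : br 0 z = 0.
Proof.
have h : br 0 z + br 0 z = br 0 z + 0 by rewrite addr0 -brDl addr0.
exact: (addrI _ h).
Qed.
Lemma br0r z : br z 0 = 0.
Proof.
have h : br z 0 + br z 0 = br z 0 + 0 by rewrite addr0 -brDr addr0.
exact: (addrI _ h).
Qed.
Lemma brZl c x z : br (c *: x) z = c *: br x z.
Proof. by case: Hbr => h _ _ _; have := h c x 0 z; rewrite !addr0 br0l addr0. Qed.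
Lemma brZr c x z : br z (c *: x) = c *: br z x.
Proof. by case: Hbr => _ h _ _; have := h c x 0 z; rewrite !addr0 br0r addr0. Qed.
Lemma brNl x z : br (- x) z = - br x z.
Proof. by rewrite -scaleN1r brZl scaleN1r. Qed.
Lemma brNr x z : br z (- x) = - br z x.
Proof. by rewrite -scaleN1r brZr scaleN1r. Qed.
Lemma brBl x y z : br (x - y) z = br x z - br y z.
Proof. by rewrite brDl brNl. Qed.
Lemma brBr x y z : br z (x - y) = br z x - br z y.
Proof. by rewrite brDr brNr. Qed.
Lemma brxx x : br x x = 0.
Proof. by case: Hbr. Qed.
Lemma brC x y : br x y = - br y x.
Proof.
have := brxx (x + y); rewrite brDl !brDr !brxx add0r addr0 => /eqP.
by rewrite addr_eq0 => /eqP.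
Qed.
Lemma jac x y z : br x (br y z) = br (br x y) z + br y (br x z).
Proof.
case: Hbr => _ _ _ J; have := J x y z.
move=> /eqP; rewrite -addrA addr_eq0 => /eqP ->.
rewrite opprD (brC z (br x y)) opprK (brC z x) brNr opprK addrC.
by rewrite (brC (br x y)) ?opprK; rewrite -brC.
Qed.

Lemma adE X u : u *m ad br X = br X u.
Proof.
have lf : linear (br X) by move=> c x y; case: Hbr => _ h _ _; exact: h.
pose fL : {linear V -> V} := HB.pack (br X) (GRing.isLinear.Build _ _ _ _ (br X) lf).
exact: (mul_rV_lin1 fL).
Qed.

Lemma mx_ext (M N : 'M[R]_n) : (forall u : V, u *m M = u *m N) -> M = N.
Proof. by move=> h; apply/row_matrixP => i; rewrite !rowE h. Qed.

Lemma adDZ c X Y : ad br (c *: X + Y) = c *: ad br X + ad br Y.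
Proof.
by apply: mx_ext => u; rewrite mulmxDr -scalemxAr !adE brDl brZl.
Qed.

Lemma ad_br x y : ad br (br x y) = ad br y *m ad br x - ad br x *m ad br y.
Proof.
apply: mx_ext => u; rewrite mulmxBr !mulmxA !adE jac.
by rewrite addrK.
Qed.

Lemma killingC x y : killing br x y = killing br y x.
Proof. exact: mxtrace_mulC. Qed.

Lemma killingDZ c x y z : killing br (c *: x + y) z = c * killing br x z + killing br y z.
Proof. by rewrite /killing adDZ mulmxDl -scalemxAl mxtraceD mxtraceZ. Qed.

Lemma killingDZr c x y z : killing br z (c *: x + y) = c * killing br z x + killing br z y.
Proof. by rewrite !(killingC z) killingDZ. Qed.

Lemma killingZr c x z : killing br z (c *: x) = c * killing br z x.
Proof. by have := killingDZr c x 0 z; rewrite addr0 => ->; rewrite /killing (_ : ad br 0 = 0) ?mulmx0 ?mxtrace0 ?addr0 //; apply: mx_ext => u; rewrite adE br0l mulmx0. Qed.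

Lemma ad0 : ad br 0 = 0.
Proof. by apply: mx_ext => u; rewrite adE br0l mulmx0. Qed.

Lemma killing0r z : killing br z 0 = 0.
Proof. by rewrite /killing ad0 mulmx0 mxtrace0. Qed.
Lemma killing0l z : killing br 0 z = 0.
Proof. by rewrite /killing ad0 mul0mx mxtrace0. Qed.

Lemma killingNl x z : killing br (- x) z = - killing br x z.
Proof. by have := killingDZ (-1) x 0 z; rewrite addr0 killing0l addr0 scaleN1r mulN1r. Qed.
Lemma killingNr x z : killing br z (- x) = - killing br z x.
Proof. by rewrite !(killingC z) killingNl. Qed.

Lemma killing_inv x y z : killing br (br x y) z = killing br x (br y z).
Proof.
rewrite /killing !ad_br mulmxBl mulmxBr !raddfB /= -!mulmxA.
congr (_ - _); rewrite mxtrace_mulC -mulmxA; done.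
Qed.

Lemma killing_inv2 x y z : killing br (br x y) z = - killing br y (br x z).
Proof. by rewrite brC killingNl killing_inv. Qed.

Lemma thDZ c x y : theta (c *: x + y) = c *: theta x + theta y.
Proof. by case: Hth. Qed.
Lemma th0 : theta 0 = 0.
Proof.
have := thDZ 1 0 0; rewrite scale1r addr0 scale1r => h.
have h2 : theta 0 + theta 0 = theta 0 + 0 by rewrite addr0 -h.
exact: (addrI _ h2).
Qed.
Lemma thD x y : theta (x + y) = theta x + theta y.
Proof. by have := thDZ 1 x y; rewrite !scale1r. Qed.
Lemma thZ c x : theta (c *: x) = c *: theta x.
Proof. by rewrite -(addr0 (c *: x)) thDZ th0 addr0. Qed.
Lemma thN x : theta (- x) = - theta x.
Proof. by rewrite -scaleN1r thZ scaleN1r. Qed.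
Lemma thbr x y : theta (br x y) = br (theta x) (theta y).
Proof. by case: Hth. Qed.
Lemma thth x : theta (theta x) = x.
Proof. by case: Hth. Qed.

Lemma ppD x y : ppart theta x -> ppart theta y -> ppart theta (x + y).
Proof. by rewrite /ppart thD => -> ->; rewrite opprD. Qed.
Lemma ppZ c x : ppart theta x -> ppart theta (c *: x).
Proof. by rewrite /ppart thZ => ->; rewrite scalerN. Qed.
Lemma ppN x : ppart theta x -> ppart theta (- x).
Proof. by rewrite /ppart thN => ->. Qed.
Lemma kkD x y : kpart theta x -> kpart theta y -> kpart theta (x + y).
Proof. by rewrite /kpart thD => -> ->. Qed.

Lemma pp_k x y : ppart theta x -> ppart theta y -> kpart theta (br x y).
Proof. by rewrite /kpart thbr => -> ->; rewrite brNl brNr opprK. Qed.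
Lemma pk_p x y : ppart theta x -> kpart theta y -> ppart theta (br x y).
Proof. by rewrite /ppart thbr => -> ->; rewrite brNl. Qed.
Lemma kp_p x y : kpart theta x -> ppart theta y -> ppart theta (br x y).
Proof. by rewrite /ppart thbr => -> ->; rewrite brNr. Qed.
Lemma kk_k x y : kpart theta x -> kpart theta y -> kpart theta (br x y).
Proof. by rewrite /kpart thbr => -> ->. Qed.

Lemma kp0 x : kpart theta x -> ppart theta x -> x = 0.
Proof.
rewrite /kpart /ppart => -> /eqP; rewrite -addr_eq0 -mulr2n -scaler_nat.
by rewrite scaler_eq0 pnatr_eq0 /= => /eqP.
Qed.

Lemma decomp U : exists Uk Up, [/\ kpart theta Uk, ppart theta Up & U = Uk + Up].
Proof.
exists (2^-1 *: (U + theta U)), (2^-1 *: (U - theta U)); split.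
- by rewrite /kpart thZ thD thth addrC.
- by rewrite /ppart thZ thD thN thth -scalerN opprB addrC.
- by rewrite -scalerDr addrACA subrr addr0 -mulr2n -scaler_nat scalerA mulVf ?scale1r // pnatr_eq0.
Qed.

Hypothesis Heps : eps = 1 \/ eps = -1.
Hypothesis Hk : forall X, kpart theta X -> X != 0 -> killing br X X < 0.
Hypothesis Hp : forall X, ppart theta X -> X != 0 -> 0 < inner br eps X X.

Lemma eps_neq0 : eps != 0.
Proof. by case: Heps => ->; rewrite ?oppr_eq0 oner_eq0. Qed.

Lemma pdef v : ppart theta v -> killing br v v = 0 -> v = 0.
Proof.
move=> pv kv; case: (eqVneq v 0) => // nz.
by have := Hp pv nz; rewrite /inner kv mulr0 ltxx.
Qed.
Lemma kdef v : kpart theta v -> killing br v v = 0 -> v = 0.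
Proof.
move=> kv h; case: (eqVneq v 0) => // nz.
by have := Hk kv nz; rewrite h ltxx.
Qed.

Lemma lemD X M : ppart theta X -> br X (br X M) = 0 -> br X M = 0.
Proof.
move=> pX h; have [Mk [Mp [kM pM eM]]] := decomp M; rewrite eM in h *.
have e1 : kpart theta (br X (br X Mk)) by apply: pp_k => //; apply: pk_p.
have e2 : ppart theta (br X (br X Mp)) by apply: pk_p => //; apply: pp_k.
move: h; rewrite !brDr => /eqP; rewrite addr_eq0 => /eqP h.
have z1 : br X (br X Mk) = 0 by apply: kp0 => //; rewrite h; apply: ppN.
have z2 : br X (br X Mp) = 0 by apply/eqP; rewrite -oppr_eq0 -h z1.
have a1 : br X Mk = 0.
  by apply: (pdef (pk_p pX kM)); rewrite killing_inv2 z1 killing0r oppr0.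
have a2 : br X Mp = 0.
  by apply: (kdef (pp_k pX pM)); rewrite killing_inv2 z2 killing0r oppr0.
by rewrite a1 a2 addr0.
Qed.

Lemma lemEXT X Y : ppart theta X -> ppart theta Y ->
  (forall Z, ppart theta Z -> br Y (br X Z) = 0) ->
  (forall Z, ppart theta Z -> br X (br Y Z) = 0) ->
  forall U, br X (br Y U) = 0 /\ br Y (br X U) = 0.
Proof.
move=> pX pY h1 h2.
have C0 : br X Y = 0.
  apply: (kdef (pp_k pX pY)).
  by rewrite killing_inv h1 // killing0r.
have comm W : br Y (br X W) = br X (br Y W).
  by rewrite jac (brC Y) C0 oppr0 br0l add0r.
have onk K : kpart theta K -> br X (br Y K) = 0.
  move=> kK; set T := br X (br Y K).
  have kT : kpart theta T by apply: pp_k => //; apply: pk_p.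
  apply: (kdef kT); rewrite {1}/T killing_inv2 killing_inv2 comm.
  by rewrite /T h1 ?br0r ?killing0r ?oppr0 //; exact: pk_p.
move=> U; have [Uk [Up [kU pU ->]]] := decomp U.
have e : br X (br Y (Uk + Up)) = 0 by rewrite !brDr onk // h2 // addr0.
by split => //; rewrite comm.
Qed.

Lemma lemL X Y : ppart theta X ->
  (forall U, br X (br Y U) = 0) -> (forall U, br Y (br X U) = 0) ->
  forall U W, br (br X U) (br Y W) = 0.
Proof.
move=> pX h1 h2 U W.
have i1 : br Y (br (br X U) W) = br (br X U) (br Y W).
  by rewrite jac h2 br0l add0r.
have i2 : br X (- br (br Y W) U) = br (br X U) (br Y W).
  by rewrite brNr jac h1 br0l add0r brC opprK.
rewrite -i2; apply: lemD => //.
by rewrite i2 -i1 h1.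
Qed.

Lemma mul_lin1g (g : V -> V) : (forall c x y, g (c *: x + y) = c *: g x + g y) ->
  forall u, u *m lin1_mx g = g u.
Proof.
move=> hg u; have lf : linear g by move=> c x y; exact: hg.
pose fL : {linear V -> V} := HB.pack g (GRing.isLinear.Build _ _ _ _ g lf).
exact: (mul_rV_lin1 fL).
Qed.

Lemma lin1_eq0 (g : V -> V) : (forall c x y, g (c *: x + y) = c *: g x + g y) ->
  lin1_mx g = 0 <-> forall u, g u = 0.
Proof.
move=> hg; split => [h u | h]; first by rewrite -mul_lin1g // h mulmx0.
by apply: mx_ext => u; rewrite mul_lin1g // mulmx0.
Qed.

Lemma exN Y : exists N : {vspace V}, forall v, v \in N <->
  [/\ ppart theta v, (forall U, br v (br Y U) = 0) & (forall U, br Y (br v U) = 0)].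
Proof.
pose F0 := fun v : V => theta v + v.
pose F1 := fun v : V => lin1_mx (fun U => br v (br Y U)).
pose F2 := fun v : V => lin1_mx (fun U => br Y (br v U)).
have l0 : linear F0.
  by move=> c x y; rewrite /F0 thDZ scalerDr addrACA.
have l1 : linear F1.
  by move=> c x y; apply/matrixP => i j; rewrite /F1 /lin1_mx !mxE brDl brZl !mxE.
have l2 : linear F2.
  by move=> c x y; apply/matrixP => i j; rewrite /F2 /lin1_mx !mxE brDl brZl brDr brZr !mxE.
pose G0 : {linear V -> V} := HB.pack F0 (GRing.isLinear.Build _ _ _ _ F0 l0).
pose G1 : {linear V -> 'M[R]_n} := HB.pack F1 (GRing.isLinear.Build _ _ _ _ F1 l1).
pose G2 : {linear V -> 'M[R]_n} := HB.pack F2 (GRing.isLinear.Build _ _ _ _ F2 l2).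
exists (lker (linfun G0) :&: lker (linfun G1) :&: lker (linfun G2))%VS => v.
rewrite !memv_cap !memv_ker !lfunE /=.
have hg1 : forall c x y, br v (br Y (c *: x + y)) = c *: br v (br Y x) + br v (br Y y).
  by move=> c x y; rewrite brDr brZr brDr brZr.
have hg2 : forall c x y, br Y (br v (c *: x + y)) = c *: br Y (br v x) + br Y (br v y).
  by move=> c x y; rewrite brDr brZr brDr brZr.
split.
- case/andP => /andP [/eqP h0 /eqP h1] /eqP h2; split.
  + by apply/eqP; rewrite -addr_eq0; apply/eqP.
  + by apply/(lin1_eq0 hg1).
  + by apply/(lin1_eq0 hg2).
- case=> h0 h1 h2; apply/andP; split; first (apply/andP; split).
  + by rewrite /F0 /= h0 addNr.
  + by apply/eqP/(lin1_eq0 hg1).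
  + by apply/eqP/(lin1_eq0 hg2).
Qed.

Hypothesis Hirr : forall W : {vspace V},
  (forall X, X \in W -> ppart theta X) ->
  (forall K X, kpart theta K -> X \in W -> br K X \in W) ->
  W = 0%VS \/ (forall X, ppart theta X -> X \in W).

Lemma partb X Y : ppart theta X -> ppart theta Y ->
  (forall Z W, ppart theta Z -> ppart theta W -> curv4 br eps X Z W Y = 0) ->
  X = 0 \/ Y = 0.
Proof.
move=> pX pY hc.
have H' Z W : ppart theta Z -> ppart theta W -> killing br (br (br X Z) W) Y = 0.
  move=> pZ pW; have := hc Z W pZ pW.
  rewrite /curv4 /inner /curv killingNl mulrN mulNr opprK => /eqP.
  by rewrite mulf_eq0 (negbTE eps_neq0) => /eqP.
have b1 Z : ppart theta Z -> br Y (br X Z) = 0.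
  move=> pZ; rewrite brC; apply/eqP; rewrite oppr_eq0; apply/eqP.
  have pV : ppart theta (br (br X Z) Y) by apply: kp_p => //; apply: pp_k.
  apply: (pdef pV); rewrite {1}killing_inv (brC Y (br (br X Z) Y)) killingNr -killing_inv.
  by rewrite H' // oppr0.
have b2 Z : ppart theta Z -> br X (br Y Z) = 0.
  move=> pZ; rewrite brC; apply/eqP; rewrite oppr_eq0; apply/eqP.
  have pV : ppart theta (br (br Y Z) X) by apply: kp_p => //; apply: pp_k.
  have key V : ppart theta V -> killing br (br Y Z) (br X V) = 0.
    by move=> pV'; rewrite killingC (brC Y Z) killingNr -killing_inv H' // oppr0.
  by apply: (pdef pV); rewrite {1}killing_inv key.
have [N hN] := exN Y.
have XN : X \in N.
  apply/hN; split => // U; have := lemEXT pX pY b1 b2 U; case=> //.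
have pN : forall v, v \in N -> ppart theta v by move=> v /hN [].
have iN : forall K v, kpart theta K -> v \in N -> br K v \in N.
  move=> K v kK /hN [pv h1 h2]; apply/hN; split.
  - exact: kp_p.
  - by move=> U; rewrite (brC K v) brNl (lemL pv h1 h2) oppr0.
  - move=> U; rewrite jac (brC K) brNr h2 oppr0 br0l add0r.
    by rewrite brNl (lemL pv h1 h2) oppr0.
case: (Hirr pN iN) => [N0 | Np].
  by left; apply/eqP; rewrite -memv0 -N0.
right; have /hN [_ _ h2] := Np _ pY.
have adY : ad br Y = 0.
  by apply: mx_ext => u; rewrite adE mulmx0; apply: lemD.
by apply: pdef => //; rewrite /killing adY mulmx0 mxtrace0.
Qed.

Lemma ipC x y : inner br eps x y = inner br eps y x.
Proof. by rewrite /inner killingC. Qed.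
Lemma ipDZr c x y z : inner br eps z (c *: x + y) = c * inner br eps z x + inner br eps z y.
Proof. by rewrite /inner killingDZr mulrDr mulrCA. Qed.
Lemma ipZr c x z : inner br eps z (c *: x) = c * inner br eps z x.
Proof. by rewrite /inner killingZr mulrCA. Qed.
Lemma ipBr x y z : inner br eps z (x - y) = inner br eps z x - inner br eps z y.
Proof. by have := ipDZr (-1) y x z; rewrite scaleN1r mulN1r (addrC (- y)) => ->; rewrite addrC. Qed.

Variable a : {vspace V}.
Hypothesis Ha : max_abelian br theta a.

Lemma a_p A : A \in a -> ppart theta A.
Proof. by case: Ha => [[h _] _]; exact: h. Qed.
Lemma a_ab A B : A \in a -> B \in a -> br A B = 0.
Proof. by case: Ha => [[_ h] _]; exact: h. Qed.

Lemma lemKER d Z A : in_gbeta br eps a d Z -> A \in a -> inner br eps d A = 0 ->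
  br A Z = 0.
Proof.
move=> hZ hA h0; apply: lemD; first exact: a_p.
by rewrite hZ // h0 expr0n /= mulr0 scale0r.
Qed.

Lemma lemLIN d Z A0 A : in_gbeta br eps a d Z -> A0 \in a -> inner br eps d A0 != 0 ->
  A \in a -> br A Z = (inner br eps d A / inner br eps d A0) *: br A0 Z.
Proof.
move=> hZ hA0 nz hA.
set s := inner br eps d A / inner br eps d A0.
have h3 : A - s *: A0 \in a by rewrite memvB // memvZ.
have e : inner br eps d (A - s *: A0) = 0.
  by rewrite ipBr ipZr /s divfK // subrr.
have := lemKER hZ h3 e; rewrite brBl brZl => /eqP; rewrite subr_eq0 => /eqP.
done.
Qed.

Local Notation ip := (inner br eps).

Lemma eps2_neq0 (b : R) : b != 0 -> - eps * b ^+ 2 != 0.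
Proof. by move=> nz; rewrite mulf_neq0 ?oppr_eq0 ?eps_neq0 // expf_neq0. Qed.

Lemma parta beta gamma : beta \in a -> beta != 0 -> gamma \in a -> gamma != 0 ->
  ~ proportional beta gamma -> inner br eps beta gamma != 0 ->
  forall Xb Xg A, ppart theta Xb -> in_gbeta br eps a beta Xb -> Xb != 0 ->
  ppart theta Xg -> in_gbeta br eps a gamma Xg -> Xg != 0 ->
  A \in a -> inner br eps beta A != 0 -> curv br A Xb Xg != 0.
Proof.
move=> ba bnz ga gnz nprop bg Xb Xg A pXb gXb Xbnz pXg gXg Xgnz hA bA.
rewrite /curv oppr_eq0; apply/negP => /eqP h0.
set A1 := ip beta beta *: gamma - ip beta gamma *: beta.
have A1a : A1 \in a by rewrite memvB // memvZ.
have bA1 : ip beta A1 = 0 by rewrite /A1 ipBr !ipZr mulrC subrr.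
have bb : 0 < ip beta beta by apply: Hp => //; exact: a_p.
have g1nz : ip gamma A1 != 0.
  apply/negP => /eqP g10.
  have AA : ip A1 A1 = 0.
    by rewrite {2}/A1 ipBr !ipZr (ipC A1 gamma) (ipC A1 beta) g10 bA1 !mulr0 subrr.
  have A10 : A1 = 0.
    case: (eqVneq A1 0) => // nz; have := Hp (a_p A1a) nz.
    by rewrite AA ltxx.
  apply: nprop; exists ((ip beta gamma)^-1 * ip beta beta).
  move/eqP: A10; rewrite /A1 subr_eq0 => /eqP e.
  by rewrite -scalerA e scalerA mulVf // scale1r.
set g1 := ip gamma A1.
set b := ip beta A.
have s1 : br A1 Xb = 0 by apply: (lemKER gXb).
set Kb := br A Xb.
set Sg := br A1 Xg.
have s3 : br Kb Sg = 0.
  have : br A1 (br Kb Xg) = 0 by rewrite h0 br0r.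
  by rewrite jac /Kb jac (a_ab A1a hA) br0l s1 br0r add0r br0l add0r.
have s4 : br Xb Xg = 0.
  have : br A (br Kb Xg) = 0 by rewrite h0 br0r.
  rewrite jac {1}/Kb gXb // brZl (lemLIN gXg A1a g1nz hA) -/Sg brZr s3 scaler0 addr0.
  by move/eqP; rewrite scaler_eq0 (negbTE (eps2_neq0 bA)) /= => /eqP.
have s5 : br Xb Sg = 0.
  have : br A1 (br Xb Xg) = 0 by rewrite s4 br0r.
  by rewrite jac s1 br0l add0r.
set H := br Xg Sg.
have s6 : br H Xb = 0.
  by rewrite /H brC jac s4 s5 br0l br0r addr0 oppr0.
have pH : ppart theta H by apply: pk_p => //; apply: pp_k => //; exact: a_p.
have cH A2 : A2 \in a -> br A2 H = 0.
  move=> hA2; rewrite /H jac.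
  have e1 : br A2 Xg = (ip gamma A2 / g1) *: Sg := lemLIN gXg A1a g1nz hA2.
  have e2 : br A2 Sg = (ip gamma A2 / g1) *: ((- eps * g1 ^+ 2) *: Xg).
    by rewrite /Sg jac (a_ab hA2 A1a) br0l add0r e1 brZr /Sg (gXg _ A1a).
  by rewrite e1 e2 brZl brxx scaler0 add0r !brZr brxx !scaler0.
have Hb : abelian_sub br theta (a + <[H]>)%VS.
  split.
  - move=> v /memv_addP [u ua [w /vlineP [k ->] ->]]; apply: ppD; [exact: a_p | exact: ppZ].
  - move=> v1 v2 /memv_addP [u1 u1a [w1 /vlineP [k1 ->] ->]] /memv_addP [u2 u2a [w2 /vlineP [k2 ->] ->]].
    rewrite !brDl !brDr !brZl !brZr (a_ab u1a u2a) cH // (brC H u2) cH // brxx.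
    by rewrite !scaler0 oppr0 !scaler0 !addr0.
have Ha' : (a + <[H]>)%VS = a by case: Ha => _ m; apply: m => //; exact: addvSl.
have Hin : H \in a.
  rewrite -Ha'; apply/memv_addP; exists 0; first exact: mem0v.
  by exists H; [exact: memv_line | rewrite add0r].
have Sgnz : Sg != 0.
  apply/negP => /eqP S0; have := gXg _ A1a; rewrite /Sg in S0; rewrite S0 br0r.
  move/esym/eqP; rewrite scaler_eq0 (negbTE (eps2_neq0 g1nz)) (negbTE Xgnz).
  done.
have kS : kpart theta Sg by apply: pp_k => //; exact: a_p.
have bH : ip beta H != 0.
  rewrite /inner /H -killing_inv (lemLIN gXg A1a g1nz ba).
  have := killingDZ (ip gamma beta / g1) Sg 0 Sg; rewrite addr0 killing0l addr0 => ->.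
  rewrite mulf_neq0 ?oppr_eq0 ?eps_neq0 // mulf_neq0 ?(lt_eqF (Hk kS Sgnz)) //.
  by rewrite mulf_neq0 ?invr_eq0 // ipC.
have Kbnz : Kb != 0.
  apply/negP => /eqP K0; have := gXb _ hA; rewrite /Kb in K0; rewrite K0 br0r.
  move/esym/eqP; rewrite scaler_eq0 (negbTE (eps2_neq0 bA)) (negbTE Xbnz).
  done.
have := s6; rewrite (lemLIN gXb hA bA Hin) => /eqP.
by rewrite scaler_eq0 mulf_eq0 invr_eq0 (negbTE bH) (negbTE bA) /= (negbTE Kbnz).
Qed.

Lemma main_all :
  (forall beta gamma : V,
     restricted_root br eps a beta -> restricted_root br eps a gamma ->
     ~ proportional beta gamma -> inner br eps beta gamma != 0 ->
     forall Xb Xg A : V,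
       in_pbeta br theta eps a beta Xb -> Xb != 0 ->
       in_pbeta br theta eps a gamma Xg -> Xg != 0 ->
       A \in a -> inner br eps beta A != 0 ->
       curv br A Xb Xg != 0)
  /\
  (forall X Y : V, ppart theta X -> ppart theta Y ->
     (forall Z W : V, ppart theta Z -> ppart theta W ->
        curv4 br eps X Z W Y = 0) ->
     X = 0 \/ Y = 0).
Proof.
split; last exact: partb.
move=> beta gamma [ba bnz _] [ga gnz _] np bg Xb Xg A [pXb gXb] Xbnz [pXg gXg] Xgnz hA bA.
exact: (parta ba bnz ga gnz np bg pXb gXb Xbnz pXg gXg Xgnz hA bA).
Qed.

End Basics.

Unset Implicit Arguments.

Theorem lemma2p1 (R : realType) (n : nat) (br : 'rV[R]_n -> 'rV[R]_n -> 'rV[R]_n)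
  (theta : 'rV[R]_n -> 'rV[R]_n) (eps : R) (a : {vspace 'rV[R]_n}) :
  irreducible_symmetric br theta eps ->
  max_abelian br theta a ->
  (forall beta gamma : 'rV[R]_n,
     restricted_root br eps a beta -> restricted_root br eps a gamma ->
     ~ proportional beta gamma -> inner br eps beta gamma != 0 ->
     forall Xb Xg A : 'rV[R]_n,
       in_pbeta br theta eps a beta Xb -> Xb != 0 ->
       in_pbeta br theta eps a gamma Xg -> Xg != 0 ->
       A \in a -> inner br eps beta A != 0 ->
       curv br A Xb Xg != 0)
  /\
  (forall X Y : 'rV[R]_n, ppart theta X -> ppart theta Y ->
     (forall Z W : 'rV[R]_n, ppart theta Z -> ppart theta W ->
        curv4 br eps X Z W Y = 0) ->
     X = 0 \/ Y = 0).
Proof.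
move=> [[Hbr _ Hth Heps] [Hk Hp _ Hirr]] Ha.
exact: (main_all Hbr Hth Heps Hk Hp Hirr Ha).
Qed.
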